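(* Let $a<b$ be real numbers and $I=[a,b]$. There is a constant $\varepsilon_0>0$ such that for every $0<\varepsilon<\varepsilon_0$ there exist piecewise continuous functions $q_1,q_2$ on $I$ and an interval $I_\varepsilon\subset(a,b)$ of length $\varepsilon$ such that $q_1(t)\le q_2(t)$ for all $t\in I\setminus I_\varepsilon$ and $q_1(t)>q_2(t)$ for all $t\in I_\varepsilon$, and for which Sturm's comparison theorem fails on $I$; that is, the equation $u''+q_1(t)u=0$ has a solution $u$ with $u(a)=u(b)=0$ and $u(t)\neq0$ for $t\in(a,b)$, while the equation $v''+q_2(t)v=0$ has a solution $v$ with $v(t)\neq 0$ for all $t\in[a,b]$.
   Context: All coefficient functions are piecewise continuous on $I$, and ''solution'' always means a nontrivial (not identically zero) solution. *)

(* Defs.v *)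
From Stdlib Require Import Reals List.
From Coquelicot Require Import Coquelicot.
Open Scope R_scope.

Definition cont_within (f : R -> R) (a b t : R) : Prop :=
  filterlim f (within (fun x => a <= x <= b) (locally t)) (locally (f t)).

(* q is piecewise continuous on [a,b]: there is a partition
   a = p 0 < p 1 < ... < p n = b such that on each open piece (p i, p (i+1))
   q coincides with a function continuous on the closed piece [p i, p (i+1)]
   (i.e. q is continuous on the open piece with finite one-sided limits at
   the partition points). *)
Definition piecewise_continuous (q : R -> R) (a b : R) : Prop :=
  exists (n : nat) (p : nat -> R),
    p 0%nat = a /\ p n = b /\
    (forall i, (i < n)%nat -> p i < p (S i)) /\
    (forall i, (i < n)%nat ->
       exists g : R -> R,
         (forall t, p i <= t <= p (S i) -> cont_within g (p i) (p (S i)) t) /\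
         (forall t, p i < t < p (S i) -> g t = q t)).

Definition is_solution (q u : R -> R) (a b : R) : Prop :=
  exists du : R -> R,
    (forall t, a < t < b -> is_derive u t (du t)) /\
    (forall t, a <= t <= b -> cont_within u a b t /\ cont_within du a b t) /\
    (exists S : list R, forall t, a < t < b -> ~ In t S ->
        is_derive du t (- (q t * u t))) /\
    (exists t, a <= t <= b /\ u t <> 0).

(* Main.v *)
Require Import Defs.
From Stdlib Require Import Reals Lra Lia List.
From Coquelicot Require Import Coquelicot.
Open Scope R_scope.

Definition R1 (y : R) := (y + Rabs y) / 2.
Definition P (y : R) := R1 y * R1 y.

Lemma R1_pos y : 0 <= y -> R1 y = y.
Proof. intros; unfold R1; rewrite Rabs_pos_eq; lra. Qed.
Lemma R1_neg y : y <= 0 -> R1 y = 0.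
Proof. intros; unfold R1; rewrite Rabs_left1; lra. Qed.

Lemma P_deriv y : is_derive P y (2 * R1 y).
Proof.
  destruct (Rlt_dec 0 y) as [Hy|Hy].
  - apply is_derive_ext_loc with (f := fun x => x * x).
    + apply locally_interval with 0 p_infty; simpl; auto.
      intros x Hx _; unfold P; rewrite R1_pos; lra.
    + rewrite R1_pos by lra.
      auto_derive; [auto|ring].
  - destruct (Rlt_dec y 0) as [Hy'|Hy'].
    + apply is_derive_ext_loc with (f := fun x => 0).
      * apply locally_interval with m_infty 0; simpl; auto.
        intros x _ Hx; unfold P; rewrite R1_neg; lra.
      * rewrite R1_neg by lra. auto_derive; try ring; auto.
    + assert (y = 0) by lra; subst y.
      apply is_derive_Reals. intros e He. exists (mkposreal e He).
      intros h Hh Hhe. simpl in Hhe.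
      rewrite R1_neg by lra. rewrite Rplus_0_l.
      unfold P; rewrite (R1_neg 0) by lra.
      destruct (Rle_dec 0 h).
      * rewrite R1_pos by lra. rewrite Rabs_pos_eq in Hhe by lra.
        replace ((h*h - 0*0)/h - 2*0) with h by (field; auto).
        rewrite Rabs_pos_eq; lra.
      * rewrite R1_neg by lra.
        replace ((0*0 - 0*0)/h - 2*0) with 0 by (field; auto).
        rewrite Rabs_R0; lra.
Qed.

Lemma R1_deriv_pos y : 0 < y -> is_derive R1 y 1.
Proof.
  intros Hy. apply is_derive_ext_loc with (f := fun x => x).
  + apply locally_interval with 0 p_infty; simpl; auto.
    intros x Hx _; rewrite R1_pos; lra.
  + auto_derive; try ring; auto.
Qed.
Lemma R1_deriv_neg y : y < 0 -> is_derive R1 y 0.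
Proof.
  intros Hy. apply is_derive_ext_loc with (f := fun x => 0).
  + apply locally_interval with m_infty 0; simpl; auto.
    intros x _ Hx; rewrite R1_neg; lra.
  + auto_derive; try ring; auto.
Qed.

Lemma R1_cont y : continuous R1 y.
Proof.
  apply continuity_pt_filterlim. unfold R1.
  apply continuity_pt_div.
  - apply continuity_pt_plus. apply derivable_continuous_pt, derivable_pt_id.
    apply Rcontinuity_abs.
  - apply continuity_pt_const. intros ??; auto.
  - lra.
Qed.

Lemma cont_to_within (f : R -> R) (a b t : R) : continuous f t -> filterlim f (within (fun x => a <= x <= b) (locally t)) (locally (f t)).
Proof.
  intros H. eapply filterlim_filter_le_1; [|exact H].
  apply filter_le_within.
Qed.
Definition mm a b := (a+b)/2.
Definition hh (eps:R) := eps/2.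
Definition cc a b eps := mm a b - hh eps.
Definition dd a b eps := mm a b + hh eps.
Definition CC a b eps := hh eps * (b - a - hh eps).
Definition uu a b eps t := CC a b eps - (t - mm a b)*(t - mm a b) + P (t - dd a b eps) + P (cc a b eps - t).
Definition du a b eps t := -2*(t - mm a b) + 2 * R1 (t - dd a b eps) - 2 * R1 (cc a b eps - t).

Lemma uu_deriv a b eps t : is_derive (uu a b eps) t (du a b eps t).
Proof.
  unfold uu, du. auto_derive.
  - split; [exists (2*R1 (t + - dd a b eps)); apply P_deriv|].
    split; [exists (2*R1 (cc a b eps + - t)); apply P_deriv|]. auto.
  - replace (Derive (fun x : R => P x) (t + - dd a b eps)) with (2*R1 (t + - dd a b eps))
      by (symmetry; apply is_derive_unique, P_deriv).
    replace (Derive (fun x : R => P x) (cc a b eps + - t)) with (2*R1 (cc a b eps + - t))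
      by (symmetry; apply is_derive_unique, P_deriv). unfold Rminus. ring.
Qed.

Lemma du_cont a b eps t : continuous (du a b eps) t.
Proof.
  apply continuity_pt_filterlim. unfold du.
  assert (HR : forall y, continuity_pt R1 y) by (intro y; apply continuity_pt_filterlim, R1_cont).
  assert (Hid : continuity_pt (fun x => x) t) by apply derivable_continuous_pt, derivable_pt_id.
  assert (Hc : forall k, continuity_pt (fun _ => k) t) by (intro k; apply continuity_pt_const; intros ??; reflexivity).
  assert (H1 : continuity_pt (fun x => R1 (x - dd a b eps)) t).
  { apply (continuity_pt_comp (fun x => x - dd a b eps) R1).
    apply continuity_pt_minus; auto. apply HR. }
  assert (H2 : continuity_pt (fun x => R1 (cc a b eps - x)) t).
  { apply (continuity_pt_comp (fun x => cc a b eps - x) R1).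
    apply continuity_pt_minus; auto. apply HR. }
  apply continuity_pt_minus; [apply continuity_pt_plus|].
  - apply continuity_pt_mult; auto. apply continuity_pt_minus; auto.
  - apply continuity_pt_mult; auto.
  - apply continuity_pt_mult; auto.
Qed.

Lemma du_deriv_mid a b eps t : cc a b eps < t < dd a b eps -> is_derive (du a b eps) t (-2).
Proof.
  intros Ht. unfold du. auto_derive.
  - split; [exists 0; apply R1_deriv_neg; lra|].
    split; [exists 0; apply R1_deriv_neg; lra|]. auto.
  - replace (Derive (fun x : R => R1 x) (t + - dd a b eps)) with 0
      by (symmetry; apply is_derive_unique, R1_deriv_neg; lra).
    replace (Derive (fun x : R => R1 x) (cc a b eps + - t)) with 0
      by (symmetry; apply is_derive_unique, R1_deriv_neg; lra). ring.
Qed.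

Lemma du_deriv_left a b eps t : t < cc a b eps -> hh eps > 0 -> is_derive (du a b eps) t 0.
Proof.
  intros Ht Hh. unfold du. assert (cc a b eps < dd a b eps) by (unfold cc, dd; lra). auto_derive.
  - split; [exists 0; apply R1_deriv_neg; lra|].
    split; [exists 1; apply R1_deriv_pos; lra|]. auto.
  - replace (Derive (fun x : R => R1 x) (t + - dd a b eps)) with 0
      by (symmetry; apply is_derive_unique, R1_deriv_neg; lra).
    replace (Derive (fun x : R => R1 x) (cc a b eps + - t)) with 1
      by (symmetry; apply is_derive_unique, R1_deriv_pos; lra). ring.
Qed.

Lemma du_deriv_right a b eps t : dd a b eps < t -> hh eps > 0 -> is_derive (du a b eps) t 0.
Proof.
  intros Ht Hh. unfold du. assert (cc a b eps < dd a b eps) by (unfold cc, dd; lra). auto_derive.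
  - split; [exists 1; apply R1_deriv_pos; lra|].
    split; [exists 0; apply R1_deriv_neg; lra|]. auto.
  - replace (Derive (fun x : R => R1 x) (t + - dd a b eps)) with 1
      by (symmetry; apply is_derive_unique, R1_deriv_pos; lra).
    replace (Derive (fun x : R => R1 x) (cc a b eps + - t)) with 0
      by (symmetry; apply is_derive_unique, R1_deriv_neg; lra). ring.
Qed.


Lemma uu_mid a b eps (Hab : a < b) (He : 0 < eps < b - a) t : cc a b eps <= t <= dd a b eps -> uu a b eps t = CC a b eps - (t - mm a b)*(t - mm a b).
Proof.
  intros Ht. unfold uu, P. rewrite (R1_neg (t - _)) by lra. rewrite (R1_neg (_ - t)) by lra. ring.
Qed.

Lemma mid_pos a b eps (Hab : a < b) (He : 0 < eps < b - a) t : cc a b eps <= t <= dd a b eps -> CC a b eps - (t - mm a b)*(t - mm a b) > 0.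
Proof.
  intros Ht. unfold cc, dd, CC, mm, hh in *.
  assert ((t - (a+b)/2)*(t-(a+b)/2) <= (eps/2)*(eps/2)) by nra. nra.
Qed.

Lemma uu_left a b eps (Hab : a < b) (He : 0 < eps < b - a) t : t <= cc a b eps -> uu a b eps t = 2 * hh eps * (t - a).
Proof.
  intros Ht. unfold uu, P. assert (cc a b eps < dd a b eps) by (unfold cc, dd, hh; lra).
  rewrite (R1_neg (t - _)) by lra. rewrite (R1_pos (_ - t)) by lra.
  unfold CC, cc, mm, hh. field.
Qed.

Lemma uu_right a b eps (Hab : a < b) (He : 0 < eps < b - a) t : dd a b eps <= t -> uu a b eps t = 2 * hh eps * (b - t).
Proof.
  intros Ht. unfold uu, P. assert (cc a b eps < dd a b eps) by (unfold cc, dd, hh; lra).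
  rewrite (R1_pos (t - _)) by lra. rewrite (R1_neg (_ - t)) by lra.
  unfold CC, dd, mm, hh. field.
Qed.

Lemma uu_pos a b eps (Hab : a < b) (He : 0 < eps < b - a) t : a < t < b -> uu a b eps t > 0.
Proof.
  intros Ht. destruct (Rle_dec t (cc a b eps)).
  - rewrite (uu_left a b eps Hab He) by auto. unfold hh; nra.
  - destruct (Rle_dec (dd a b eps) t).
    + rewrite (uu_right a b eps Hab He) by auto. unfold hh; nra.
    + rewrite (uu_mid a b eps Hab He) by lra. apply (mid_pos a b eps Hab He); lra.
Qed.

Lemma uu_a a b eps (Hab : a < b) (He : 0 < eps < b - a) : uu a b eps a = 0.
Proof. rewrite (uu_left a b eps Hab He). ring. unfold cc, mm, hh; lra. Qed.
Lemma uu_b a b eps (Hab : a < b) (He : 0 < eps < b - a) : uu a b eps b = 0.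
Proof. rewrite (uu_right a b eps Hab He). ring. unfold dd, mm, hh; lra. Qed.

Definition q1 a b eps t := if Rle_dec t (cc a b eps) then 0 else if Rle_dec (dd a b eps) t then 0
  else 2 / (CC a b eps - (t - mm a b)*(t - mm a b)).

Theorem theorem1 (a b : R) (hab : a < b) :
  exists eps0 : R, 0 < eps0 /\
  forall eps : R, 0 < eps < eps0 ->
  exists (q1 q2 : R -> R) (J : R -> Prop) (c d : R),
    piecewise_continuous q1 a b /\ piecewise_continuous q2 a b /\
    (* J is an interval with endpoints c < d, of length eps, inside (a,b) *)
    d - c = eps /\
    (forall t, c < t < d -> J t) /\
    (forall t, J t -> c <= t <= d) /\
    (forall t, J t -> a < t < b) /\
    (forall t, a <= t <= b -> ~ J t -> q1 t <= q2 t) /\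
    (forall t, J t -> q1 t > q2 t) /\
    (exists u, is_solution q1 u a b /\ u a = 0 /\ u b = 0 /\
               (forall t, a < t < b -> u t <> 0)) /\
    (exists v, is_solution q2 v a b /\ (forall t, a <= t <= b -> v t <> 0)).
Proof.
  exists (b - a). split; [lra|]. intros eps He.
  assert (Hh : 0 < hh eps < (b - a)/2) by (unfold hh; lra).
  assert (Hac : a < cc a b eps) by (unfold cc, mm; lra).
  assert (Hcd : cc a b eps < dd a b eps) by (unfold cc, dd; lra).
  assert (Hdb : dd a b eps < b) by (unfold dd, mm; lra).
  exists (q1 a b eps), (fun _ => 0), (fun t => cc a b eps < t < dd a b eps), (cc a b eps), (dd a b eps).
  split; [|split; [|split; [|split; [|split; [|split; [|split; [|split; [|split]]]]]]]].
  - exists 3%nat, (fun i => match i with 0%nat => a | 1%nat => cc a b eps | 2%nat => dd a b eps | _ => b end).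
    split; [reflexivity|]. split; [reflexivity|]. split.
    + intros i Hi. destruct i as [|[|[|i]]]; simpl; try lra. lia.
    + intros i Hi. destruct i as [|[|[|i]]]; [| | |lia].
      * exists (fun _ => 0). split.
        -- intros t _. unfold cont_within. apply filterlim_const.
        -- intros t Ht. unfold q1. destruct (Rle_dec t (cc a b eps)); [reflexivity|lra].
      * exists (fun t => 2 / (CC a b eps - (t - mm a b)*(t - mm a b))). split.
        -- intros t Ht. unfold cont_within. eapply filterlim_filter_le_1; [apply filter_le_within|].
           apply (ex_derive_continuous (K:=R_AbsRing) (V:=R_NormedModule) (fun t0 => 2 / (CC a b eps - (t0 - mm a b)*(t0 - mm a b)))). auto_derive.
           pose proof (mid_pos a b eps hab He t Ht). lra.
        -- intros t Ht. unfold q1. destruct (Rle_dec t (cc a b eps)); [lra|].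
           destruct (Rle_dec (dd a b eps) t); [lra|reflexivity].
      * exists (fun _ => 0). split.
        -- intros t _. unfold cont_within. apply filterlim_const.
        -- intros t Ht. unfold q1. destruct (Rle_dec t (cc a b eps)); [reflexivity|].
           destruct (Rle_dec (dd a b eps) t); [reflexivity|lra].
  - exists 1%nat, (fun i => match i with 0%nat => a | _ => b end).
    split; [reflexivity|]. split; [reflexivity|]. split.
    + intros i Hi. destruct i as [|i]; simpl; [lra|lia].
    + intros i Hi. exists (fun _ => 0). split; [|reflexivity].
      intros t _. unfold cont_within. apply filterlim_const.
  - unfold cc, dd, hh. field.
  - auto.
  - intros t Ht; lra.
  - intros t Ht; lra.
  - intros t Ht HJ. unfold q1. destruct (Rle_dec t (cc a b eps)); [lra|].
    destruct (Rle_dec (dd a b eps) t); [lra|]. exfalso; apply HJ; lra.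
  - intros t HJ. unfold q1. destruct (Rle_dec t (cc a b eps)); [lra|].
    destruct (Rle_dec (dd a b eps) t); [lra|].
    apply Rdiv_lt_0_compat; [lra|]. apply (mid_pos a b eps hab He); lra.
  - exists (uu a b eps). split; [|split; [|split]].
    + exists (du a b eps). split; [|split; [|split]].
      * intros t _. apply uu_deriv.
      * intros t _. split; unfold cont_within; apply cont_to_within.
        -- apply (ex_derive_continuous (K:=R_AbsRing) (V:=R_NormedModule) (uu a b eps)). eexists; apply uu_deriv.
        -- apply du_cont.
      * exists (cc a b eps :: dd a b eps :: nil). intros t Ht Hn.
        assert (t <> cc a b eps) by (intro E; apply Hn; simpl; auto).
        assert (t <> dd a b eps) by (intro E; apply Hn; simpl; auto).
        unfold q1. destruct (Rle_dec t (cc a b eps)).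
        -- replace (- (0 * uu a b eps t)) with 0 by ring. apply du_deriv_left; lra.
        -- destruct (Rle_dec (dd a b eps) t).
           ++ replace (- (0 * uu a b eps t)) with 0 by ring. apply du_deriv_right; lra.
           ++ rewrite (uu_mid a b eps hab He) by lra. pose proof (mid_pos a b eps hab He t ltac:(lra)).
              replace (- (2 / (CC a b eps - (t - mm a b) * (t - mm a b)) *
                 (CC a b eps - (t - mm a b) * (t - mm a b)))) with (-2) by (field; lra).
              apply du_deriv_mid; lra.
      * exists (mm a b). split; [unfold mm; lra|].
        pose proof (uu_pos a b eps hab He (mm a b) ltac:(unfold mm; lra)). lra.
    + apply (uu_a a b eps hab He).
    + apply (uu_b a b eps hab He).
    + intros t Ht. pose proof (uu_pos a b eps hab He t Ht). lra.
  - exists (fun _ => 1). split.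
    + exists (fun _ => 0). split; [|split; [|split]].
      * intros t _. auto_derive; auto.
      * intros t _. split; unfold cont_within; apply filterlim_const.
      * exists nil. intros t _ _. replace (- (0 * 1)) with 0 by ring. auto_derive; auto.
      * exists a. split; lra.
    + intros; lra.
Qed.
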